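(* Let $\Gamma\longrightarrow\Delta$ be a sequent that has a $\mathbf{C}^*$-proof of height $h$, and let $\Gamma'$ and $\Delta'$ be multisets of formulas such that $\hat{\Gamma}\subseteq\hat{\Gamma'}$ and $\hat{\Delta}\subseteq\hat{\Delta'}$, where for a multiset $\Sigma$ of formulas $\hat{\Sigma}$ denotes the set of formulas occurring in $\Sigma$. Then $\Gamma'\longrightarrow\Delta'$ has a $\mathbf{C}^*$-proof of height at most $h$.
   Context: Formulas are first-order formulas built from atomic formulas and the logical constants $\top$ (true) and $\bot$ (false), which are not counted as atomic, using $\land,\lor,\supset,\forall,\exists$; $\neg A$ abbreviates $A\supset\bot$. $B[t/x]$ denotes the result of replacing the free occurrences of $x$ in $B$ by the term $t$ (renaming bound variables as needed). A sequent $\Gamma\longrightarrow\Delta$ is a pair of finite multisets of formulas (antecedent $\Gamma$, succedent $\Delta$); $B,\Gamma$ denotes $\Gamma$ with one more occurrence of $B$ added. A sequent is an axiom if $\top\in\Delta$, or if some formula $A$ that is either $\bot$ or atomic occurs in both $\Gamma$ and $\Delta$. The rules for $\mathbf{C}^*$-proofs (premise(s) above, conclusion below, written premises $\Rightarrow$ conclusion) are the instances of the following schemata: $\bot$-R: $\Gamma\longrightarrow\Delta,\bot \ \Rightarrow\ \Gamma\longrightarrow\Delta,D$; $\land$-L$^*$: $B,D,\Gamma\longrightarrow\Delta\ \Rightarrow\ B\land D,\Gamma\longrightarrow\Delta$; $\lor$-L: $B,\Gamma\longrightarrow\Delta$ and $D,\Gamma\longrightarrow\Delta\ \Rightarrow\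 B\lor D,\Gamma\longrightarrow\Delta$; $\land$-R: $\Gamma\longrightarrow\Delta,B$ and $\Gamma\longrightarrow\Delta,D\ \Rightarrow\ \Gamma\longrightarrow\Delta,B\land D$; $\lor$-R$^*$: $\Gamma\longrightarrow\Delta,B,D\ \Rightarrow\ \Gamma\longrightarrow\Delta,B\lor D$; $\supset$-L$^*$: $\Gamma\longrightarrow B,\Delta$ and $D,\Gamma\longrightarrow\Delta\ \Rightarrow\ B\supset D,\Gamma\longrightarrow\Delta$; $\supset$-R: $B,\Gamma\longrightarrow\Delta,D\ \Rightarrow\ \Gamma\longrightarrow\Delta,B\supset D$; $\forall$-L$^*$: $\forall x P, P[t/x],\Gamma\longrightarrow\Delta\ \Rightarrow\ \forall x P,\Gamma\longrightarrow\Delta$ ($t$ any term); $\exists$-R$^*$: $\Gamma\longrightarrow\Delta,\exists x P,P[t/x]\ \Rightarrow\ \Gamma\longrightarrow\Delta,\exists x P$ ($t$ any term); $\exists$-L: $B[c/x],\Gamma\longrightarrow\Delta\ \Rightarrow\ \exists x B,\Gamma\longrightarrow\Delta$; $\forall$-R: $\Gamma\longrightarrow\Delta,B[c/x]\ \Rightarrow\ \Gamma\longrightarrow\Delta,\forall x B$; where in $\exists$-L and $\forall$-R the constant $c$ must not occur in the conclusion. A $\mathbf{C}^*$-proof of a sequent is a finite tree of sequents rooted at that sequent, whose leaves are axioms and whose internal nodes are conclusions of instances of these rules with their children as premises (no contraction rules). Height is the maximal number of sequents on a root-to-leaf path. *)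

(* Defs.v *)
(* First-order formulas with de Bruijn indices for variables,
   so that substitution B[t/x] is capture-avoiding by construction.
   Multisets of formulas are lists taken up to permutation. *)
From Stdlib Require Import List Permutation Arith.
Import ListNotations.

(* Terms: variables (de Bruijn indices; indices beyond the binding depth are
   free variables) and function symbols applied to arguments
   (constants are 0-ary function symbols). *)
Inductive term : Type :=
| Var : nat -> term
| Fn  : nat -> list term -> term.

Inductive form : Type :=
| Atom : nat -> list term -> form
| Top  : form
| Bot  : form
| And  : form -> form -> form
| Or   : form -> form -> form
| Imp  : form -> form -> form
| All  : form -> form
| Ex   : form -> form.

Definition Neg (A : form) : form := Imp A Bot.

Fixpoint lift_term (k : nat) (t : term) : term :=
  match t with
  | Var i => if k <=? i then Var (S i) else Var i
  | Fn f l => Fn f (map (lift_term k) l)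
  end.

Fixpoint subst_term (d : nat) (s : term) (t : term) : term :=
  match t with
  | Var i => if i =? d then s else if d <? i then Var (pred i) else Var i
  | Fn f l => Fn f (map (subst_term d s) l)
  end.

Fixpoint subst_form (d : nat) (s : term) (A : form) : form :=
  match A with
  | Atom p l => Atom p (map (subst_term d s) l)
  | Top => Top
  | Bot => Bot
  | And B C => And (subst_form d s B) (subst_form d s C)
  | Or B C => Or (subst_form d s B) (subst_form d s C)
  | Imp B C => Imp (subst_form d s B) (subst_form d s C)
  | All B => All (subst_form (S d) (lift_term 0 s) B)
  | Ex B => Ex (subst_form (S d) (lift_term 0 s) B)
  end.

(* P[t/x] where P is the body of a quantifier binding x (index 0) *)
Definition inst (P : form) (t : term) : form := subst_form 0 t P.

Fixpoint sym_in_term (c : nat) (t : term) : bool :=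
  match t with
  | Var _ => false
  | Fn f l => (f =? c) || existsb (sym_in_term c) l
  end.

Fixpoint sym_in_form (c : nat) (A : form) : bool :=
  match A with
  | Atom _ l => existsb (sym_in_term c) l
  | Top | Bot => false
  | And B C | Or B C | Imp B C => sym_in_form c B || sym_in_form c C
  | All B | Ex B => sym_in_form c B
  end.

Definition fresh_in (c : nat) (G D : list form) : Prop :=
  forall A, (In A G \/ In A D) -> sym_in_form c A = false.

Definition is_atomic (A : form) : Prop :=
  match A with Atom _ _ => True | _ => False end.

Definition is_axiom (G D : list form) : Prop :=
  In Top D \/ exists A, (A = Bot \/ is_atomic A) /\ In A G /\ In A D.

(* cproof G D h : the sequent G --> D has a C*-proof of height exactly h.
   Multisets are lists up to Permutation (the principal formula is
   extracted via Permutation). *)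
Inductive cproof : list form -> list form -> nat -> Prop :=
| cp_ax : forall G D, is_axiom G D -> cproof G D 1
| cp_botR : forall G D D0 X n,
    Permutation D (X :: D0) -> cproof G (Bot :: D0) n -> cproof G D (S n)
| cp_andL : forall G D G0 B C n,
    Permutation G (And B C :: G0) -> cproof (B :: C :: G0) D n -> cproof G D (S n)
| cp_orL : forall G D G0 B C n m,
    Permutation G (Or B C :: G0) -> cproof (B :: G0) D n -> cproof (C :: G0) D m ->
    cproof G D (S (max n m))
| cp_andR : forall G D D0 B C n m,
    Permutation D (And B C :: D0) -> cproof G (B :: D0) n -> cproof G (C :: D0) m ->
    cproof G D (S (max n m))
| cp_orR : forall G D D0 B C n,
    Permutation D (Or B C :: D0) -> cproof G (B :: C :: D0) n -> cproof G D (S n)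
| cp_impL : forall G D G0 B C n m,
    Permutation G (Imp B C :: G0) -> cproof G0 (B :: D) n -> cproof (C :: G0) D m ->
    cproof G D (S (max n m))
| cp_impR : forall G D D0 B C n,
    Permutation D (Imp B C :: D0) -> cproof (B :: G) (C :: D0) n -> cproof G D (S n)
| cp_allL : forall G D G0 P t n,
    Permutation G (All P :: G0) -> cproof (All P :: inst P t :: G0) D n -> cproof G D (S n)
| cp_exR : forall G D D0 P t n,
    Permutation D (Ex P :: D0) -> cproof G (Ex P :: inst P t :: D0) n -> cproof G D (S n)
| cp_exL : forall G D G0 B c n,
    Permutation G (Ex B :: G0) -> fresh_in c G D ->
    cproof (inst B (Fn c []) :: G0) D n -> cproof G D (S n)
| cp_allR : forall G D D0 B c n,
    Permutation D (All B :: D0) -> fresh_in c G D ->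
    cproof G (inst B (Fn c []) :: D0) n -> cproof G D (S n).

Definition set_incl (S S' : list form) : Prop := forall A, In A S -> In A S'.

(* Main.v *)
Require Import Defs.
From Stdlib Require Import List Permutation Arith Lia Bool.
Import ListNotations.

Fixpoint term_ind2 (P : term -> Prop) (HV : forall i, P (Var i))
  (HF : forall f l, Forall P l -> P (Fn f l)) (t : term) : P t :=
  match t with
  | Var i => HV i
  | Fn f l => HF f l ((fix go (l : list term) : Forall P l :=
       match l with
       | [] => Forall_nil P
       | x :: r => @Forall_cons _ P x r (term_ind2 P HV HF x) (go r)
       end) l)
  end.

Fixpoint ren_term (c d : nat) (t : term) : term :=
  match t with
  | Var i => Var i
  | Fn f l => Fn (if f =? c then d else f) (map (ren_term c d) l)
  end.

Fixpoint ren_form (c d : nat) (A : form) : form :=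
  match A with
  | Atom p l => Atom p (map (ren_term c d) l)
  | Top => Top
  | Bot => Bot
  | And B C => And (ren_form c d B) (ren_form c d C)
  | Or B C => Or (ren_form c d B) (ren_form c d C)
  | Imp B C => Imp (ren_form c d B) (ren_form c d C)
  | All B => All (ren_form c d B)
  | Ex B => Ex (ren_form c d B)
  end.

Lemma existsb_false_iff {A} (p : A -> bool) l :
  existsb p l = false <-> forall x, In x l -> p x = false.
Proof.
  induction l; simpl; split; intros H.
  - intros x [].
  - reflexivity.
  - apply orb_false_iff in H as [H1 H2]. intros x [<-|Hx]; auto.
    apply IHl; auto.
  - rewrite (H a (or_introl eq_refl)). apply IHl. auto.
Qed.

Lemma map_id_in' {A} (f : A -> A) l : (forall x, In x l -> f x = x) -> map f l = l.
Proof. induction l; simpl; intros; auto. rewrite H, IHl; auto. Qed.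

Lemma ren_lift c d t : forall k, ren_term c d (lift_term k t) = lift_term k (ren_term c d t).
Proof.
  induction t as [i|f l IH] using term_ind2; intros k; simpl.
  - destruct (k <=? i); reflexivity.
  - f_equal. rewrite !map_map. apply map_ext_in. intros x Hx.
    rewrite Forall_forall in IH. apply IH; auto.
Qed.

Lemma ren_subst_term c d t : forall k s,
  ren_term c d (subst_term k s t) = subst_term k (ren_term c d s) (ren_term c d t).
Proof.
  induction t as [i|f l IH] using term_ind2; intros k s; simpl.
  - destruct (i =? k); auto. destruct (k <? i); auto.
  - f_equal. rewrite !map_map. apply map_ext_in. intros x Hx.
    rewrite Forall_forall in IH. apply IH; auto.
Qed.

Lemma ren_subst_form c d A : forall k s,
  ren_form c d (subst_form k s A) = subst_form k (ren_term c d s) (ren_form c d A).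
Proof.
  induction A; intros k s; simpl; f_equal; auto.
  - rewrite !map_map. apply map_ext. intros; apply ren_subst_term.
  - rewrite IHA, ren_lift; auto.
  - rewrite IHA, ren_lift; auto.
Qed.

Lemma ren_inst c d B t : ren_form c d (inst B t) = inst (ren_form c d B) (ren_term c d t).
Proof. apply ren_subst_form. Qed.

Lemma ren_term_fresh c d t : sym_in_term c t = false -> ren_term c d t = t.
Proof.
  induction t as [i|f l IH] using term_ind2; simpl; intros H; auto.
  apply orb_false_iff in H as [H1 H2]. rewrite H1. f_equal.
  apply map_id_in'. intros x Hx. rewrite Forall_forall in IH. apply IH; auto.
  rewrite existsb_false_iff in H2. auto.
Qed.

Lemma ren_form_fresh c d A : sym_in_form c A = false -> ren_form c d A = A.
Proof.
  induction A; simpl; intros H; auto;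
    try (apply orb_false_iff in H as [H1 H2]; f_equal; auto).
  - f_equal. apply map_id_in'. rewrite existsb_false_iff in H. intros x Hx.
    apply ren_term_fresh; auto.
  - f_equal; auto.
  - f_equal; auto.
Qed.

Lemma sym_ren_term c d e t : e <> d -> sym_in_term e t = false ->
  sym_in_term e (ren_term c d t) = false.
Proof.
  induction t as [i|f l IH] using term_ind2; simpl; intros Hne H; auto.
  apply orb_false_iff in H as [H1 H2]. apply orb_false_iff. split.
  - destruct (f =? c); auto. apply Nat.eqb_neq; auto.
  - rewrite existsb_false_iff in *. intros x Hx. apply in_map_iff in Hx as [y [<- Hy]].
    rewrite Forall_forall in IH. apply IH; auto.
Qed.

Lemma sym_ren_form c d e A : e <> d -> sym_in_form e A = false ->
  sym_in_form e (ren_form c d A) = false.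
Proof.
  induction A; simpl; intros Hne H; auto;
    try (apply orb_false_iff in H as [H1 H2]; apply orb_false_iff; split; auto).
  rewrite existsb_false_iff in *. intros x Hx. apply in_map_iff in Hx as [y [<- Hy]].
  apply sym_ren_term; auto.
Qed.

Fixpoint msym_term (t : term) : nat :=
  match t with
  | Var _ => 0
  | Fn f l => max f (list_max (map msym_term l))
  end.

Fixpoint msym_form (A : form) : nat :=
  match A with
  | Atom _ l => list_max (map msym_term l)
  | Top | Bot => 0
  | And B C | Or B C | Imp B C => max (msym_form B) (msym_form C)
  | All B | Ex B => msym_form B
  end.

Lemma le_list_max x l : In x l -> x <= list_max l.
Proof.
  intros H. assert (K := proj1 (list_max_le l (list_max l)) (le_n _)).
  rewrite Forall_forall in K. auto.
Qed.

Lemma msym_term_ok t e : msym_term t < e -> sym_in_term e t = false.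
Proof.
  induction t as [i|f l IH] using term_ind2; simpl; intros H; auto.
  apply orb_false_iff; split.
  - apply Nat.eqb_neq. lia.
  - apply existsb_false_iff. intros x Hx. rewrite Forall_forall in IH. apply IH; auto.
    assert (msym_term x <= list_max (map msym_term l)) by (apply le_list_max, in_map; auto).
    lia.
Qed.

Lemma msym_form_ok A e : msym_form A < e -> sym_in_form e A = false.
Proof.
  induction A; simpl; intros H; auto;
    try (apply orb_false_iff; split; [apply IHA1|apply IHA2]; lia).
  apply existsb_false_iff. intros x Hx. apply msym_term_ok.
  assert (msym_term x <= list_max (map msym_term l)) by (apply le_list_max, in_map; auto).
  lia.
Qed.

Lemma fresh_exists (L : list form) k1 k2 :
  exists e, e <> k1 /\ e <> k2 /\ forall A, In A L -> sym_in_form e A = false.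
Proof.
  exists (S (k1 + k2 + list_max (map msym_form L))). split; [lia|]. split; [lia|].
  intros A HA. apply msym_form_ok.
  assert (msym_form A <= list_max (map msym_form L)) by (apply le_list_max, in_map; auto).
  lia.
Qed.

Lemma map_ren_fresh c d L : (forall A, In A L -> sym_in_form c A = false) ->
  map (ren_form c d) L = L.
Proof. intros H. apply map_id_in'. intros; apply ren_form_fresh; auto. Qed.

Lemma perm_in {A} (G G0 : list A) X a : Permutation G (X :: G0) -> In a G0 -> In a G.
Proof. intros H Ha. apply Permutation_in with (X :: G0). apply Permutation_sym; auto. right; auto. Qed.

Lemma perm_in0 {A} (G G0 : list A) X : Permutation G (X :: G0) -> In X G.
Proof. intros H. apply Permutation_in with (X :: G0). apply Permutation_sym; auto. left; auto. Qed.

Lemma in_perm {A} (G : list A) X : In X G -> exists G0, Permutation G (X :: G0).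
Proof.
  intros H. apply in_split in H as [l1 [l2 ->]]. exists (l1 ++ l2).
  apply Permutation_sym, Permutation_middle.
Qed.

Lemma perm_in_inv {A} (G G0 : list A) X a : Permutation G (X :: G0) -> In a G -> a = X \/ In a G0.
Proof. intros H Ha. apply (Permutation_in _ H) in Ha. destruct Ha; auto. Qed.

Lemma perm_cons_split {A} (X Y : A) L1 L2 : Permutation (X :: L1) (Y :: L2) ->
  (X = Y /\ Permutation L1 L2) \/
  exists L3, Permutation L1 (Y :: L3) /\ Permutation L2 (X :: L3).
Proof.
  intros H. assert (HY : In Y (X :: L1)).
  { apply Permutation_in with (Y :: L2). apply Permutation_sym; auto. left; auto. }
  destruct HY as [HXY|HY]; [subst Y|].
  - left. split; auto. apply Permutation_cons_inv with X; auto.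
  - right. apply in_split in HY as [a [b ->]]. exists (a ++ b). split.
    + apply Permutation_sym, Permutation_middle.
    + apply Permutation_sym. apply Permutation_cons_inv with Y.
      eapply perm_trans; [|exact H]. eapply perm_trans; [apply perm_swap|].
      apply perm_skip. apply Permutation_middle.
Qed.

Lemma fresh_in_ren e c d G D : fresh_in e G D -> e <> d ->
  fresh_in e (map (ren_form c d) G) (map (ren_form c d) D).
Proof.
  intros H Hne A [HA|HA]; apply in_map_iff in HA as [B [<- HB]];
    apply sym_ren_form; auto.
Qed.

Lemma fresh_G e G D B G0 : fresh_in e G D -> Permutation G (B :: G0) ->
  sym_in_form e B = false /\ (forall A, In A G0 -> sym_in_form e A = false)
  /\ (forall A, In A D -> sym_in_form e A = false).
Proof.
  intros H P. split; [|split].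
  - apply H. left. eapply perm_in0; eauto.
  - intros A HA. apply H. left. eapply perm_in; eauto.
  - intros A HA. apply H. right; auto.
Qed.

Lemma fresh_D e G D B D0 : fresh_in e G D -> Permutation D (B :: D0) ->
  sym_in_form e B = false /\ (forall A, In A G -> sym_in_form e A = false)
  /\ (forall A, In A D0 -> sym_in_form e A = false).
Proof.
  intros H P. split; [|split].
  - apply H. right. eapply perm_in0; eauto.
  - intros A HA. apply H. left; auto.
  - intros A HA. apply H. right. eapply perm_in; eauto.
Qed.
Definition RenAt n := forall G D, cproof G D n -> forall r1 r2,
  cproof (map (ren_form r1 r2) G) (map (ren_form r1 r2) D) n.

Lemma premL n B e G0 D e' : RenAt n -> cproof (inst B (Fn e []) :: G0) D n ->
  sym_in_form e B = false -> (forall A, In A G0 -> sym_in_form e A = false) ->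
  (forall A, In A D -> sym_in_form e A = false) ->
  cproof (inst B (Fn e' []) :: G0) D n.
Proof.
  intros HR H HB HG HD. pose proof (HR _ _ H e e') as K. cbn [map] in K.
  rewrite ren_inst, ren_form_fresh in K by auto. cbn [ren_term map] in K.
  rewrite Nat.eqb_refl in K. rewrite !map_ren_fresh in K by auto. exact K.
Qed.

Lemma premR n B e G D0 e' : RenAt n -> cproof G (inst B (Fn e []) :: D0) n ->
  sym_in_form e B = false -> (forall A, In A G -> sym_in_form e A = false) ->
  (forall A, In A D0 -> sym_in_form e A = false) ->
  cproof G (inst B (Fn e' []) :: D0) n.
Proof.
  intros HR H HB HG HD. pose proof (HR _ _ H e e') as K. cbn [map] in K.
  rewrite ren_inst, ren_form_fresh in K by auto. cbn [ren_term map] in K.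
  rewrite Nat.eqb_refl in K. rewrite !map_ren_fresh in K by auto. exact K.
Qed.

Lemma fresh_app e G D : (forall A, In A (G ++ D) -> sym_in_form e A = false) -> fresh_in e G D.
Proof. intros H A [HA|HA]; apply H; apply in_or_app; auto. Qed.

Lemma ren_proof : forall h, RenAt h.
Proof.
  intro h. induction h as [h IH] using lt_wf_ind. intros G D Hp r1 r2.
  revert IH. destruct Hp as [G D H | G D D0 X n H H0 | G D G0 B C n H H0 | G D G0 B C n m H H0 H1 | G D D0 B C n m H H0 H1 | G D D0 B C n H H0 | G D G0 B C n m H H0 H1 | G D D0 B C n H H0 | G D G0 P t n H H0 | G D D0 P t n H H0 | G D G0 B c n H H0 H1 | G D D0 B c n H H0 H1]; intros IH.
  - apply cp_ax. destruct H as [HT|[A [HA [HG HD]]]].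
    + left. apply (in_map (ren_form r1 r2)) in HT; exact HT.
    + right. exists (ren_form r1 r2 A). split; [|split; apply in_map; auto].
      destruct HA as [->|HA]; [left; reflexivity|right; destruct A; simpl in *; auto].
  - apply cp_botR with (X := ren_form r1 r2 X) (D0 := map (ren_form r1 r2) D0);
      [exact (Permutation_map (ren_form r1 r2) H) | exact (IH n (Nat.lt_succ_diag_r n) _ _ H0 r1 r2)].
  - apply cp_andL with (B := ren_form r1 r2 B) (C := ren_form r1 r2 C) (G0 := map (ren_form r1 r2) G0);
      [exact (Permutation_map (ren_form r1 r2) H) | exact (IH n (Nat.lt_succ_diag_r n) _ _ H0 r1 r2)].
  - apply cp_orL with (B := ren_form r1 r2 B) (C := ren_form r1 r2 C) (G0 := map (ren_form r1 r2) G0);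
      [exact (Permutation_map (ren_form r1 r2) H) | exact (IH n ltac:(lia) _ _ H0 r1 r2)
      | exact (IH m ltac:(lia) _ _ H1 r1 r2)].
  - apply cp_andR with (B := ren_form r1 r2 B) (C := ren_form r1 r2 C) (D0 := map (ren_form r1 r2) D0);
      [exact (Permutation_map (ren_form r1 r2) H) | exact (IH n ltac:(lia) _ _ H0 r1 r2)
      | exact (IH m ltac:(lia) _ _ H1 r1 r2)].
  - apply cp_orR with (B := ren_form r1 r2 B) (C := ren_form r1 r2 C) (D0 := map (ren_form r1 r2) D0);
      [exact (Permutation_map (ren_form r1 r2) H) | exact (IH n (Nat.lt_succ_diag_r n) _ _ H0 r1 r2)].
  - apply cp_impL with (B := ren_form r1 r2 B) (C := ren_form r1 r2 C) (G0 := map (ren_form r1 r2) G0);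
      [exact (Permutation_map (ren_form r1 r2) H) | exact (IH n ltac:(lia) _ _ H0 r1 r2)
      | exact (IH m ltac:(lia) _ _ H1 r1 r2)].
  - apply cp_impR with (B := ren_form r1 r2 B) (C := ren_form r1 r2 C) (D0 := map (ren_form r1 r2) D0);
      [exact (Permutation_map (ren_form r1 r2) H) | exact (IH n (Nat.lt_succ_diag_r n) _ _ H0 r1 r2)].
  - pose proof (IH n (Nat.lt_succ_diag_r n) _ _ H0 r1 r2) as K. cbn [map] in K.
    rewrite ren_inst in K.
    apply cp_allL with (P := ren_form r1 r2 P) (t := ren_term r1 r2 t) (G0 := map (ren_form r1 r2) G0);
      [exact (Permutation_map (ren_form r1 r2) H) | exact K].
  - pose proof (IH n (Nat.lt_succ_diag_r n) _ _ H0 r1 r2) as K. cbn [map] in K.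
    rewrite ren_inst in K.
    apply cp_exR with (P := ren_form r1 r2 P) (t := ren_term r1 r2 t) (D0 := map (ren_form r1 r2) D0);
      [exact (Permutation_map (ren_form r1 r2) H) | exact K].
  - destruct (fresh_G _ _ _ _ _ H0 H) as [FB [FG0 FD]].
    destruct (fresh_exists (G ++ D) r1 r2) as [e' [Hc [Hd Fe]]].
    pose proof (premL n B c G0 D e' (IH n (Nat.lt_succ_diag_r n)) H1 FB FG0 FD) as K1.
    pose proof (IH n (Nat.lt_succ_diag_r n) _ _ K1 r1 r2) as K2. cbn [map] in K2.
    rewrite ren_inst in K2. cbn [ren_term map] in K2.
    replace (e' =? r1) with false in K2 by (symmetry; apply Nat.eqb_neq; auto).
    apply cp_exL with (G0 := map (ren_form r1 r2) G0) (B := ren_form r1 r2 B) (c := e');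
      [exact (Permutation_map (ren_form r1 r2) H) | | exact K2].
    apply fresh_in_ren; auto. apply fresh_app; auto.
  - destruct (fresh_D _ _ _ _ _ H0 H) as [FB [FG FD0]].
    destruct (fresh_exists (G ++ D) r1 r2) as [e' [Hc [Hd Fe]]].
    pose proof (premR n B c G D0 e' (IH n (Nat.lt_succ_diag_r n)) H1 FB FG FD0) as K1.
    pose proof (IH n (Nat.lt_succ_diag_r n) _ _ K1 r1 r2) as K2. cbn [map] in K2.
    rewrite ren_inst in K2. cbn [ren_term map] in K2.
    replace (e' =? r1) with false in K2 by (symmetry; apply Nat.eqb_neq; auto).
    apply cp_allR with (D0 := map (ren_form r1 r2) D0) (B := ren_form r1 r2 B) (c := e');
      [exact (Permutation_map (ren_form r1 r2) H) | | exact K2].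
    apply fresh_in_ren; auto. apply fresh_app; auto.
Qed.

Inductive covL (G' D' : list form) : form -> Prop :=
| cL_in A : In A G' -> covL G' D' A
| cL_and B C : covL G' D' B -> covL G' D' C -> covL G' D' (And B C)
| cL_or1 B C : covL G' D' B -> covL G' D' (Or B C)
| cL_or2 B C : covL G' D' C -> covL G' D' (Or B C)
| cL_imp1 B C : covR G' D' B -> covL G' D' (Imp B C)
| cL_imp2 B C : covL G' D' C -> covL G' D' (Imp B C)
| cL_ex B c : covL G' D' (inst B (Fn c [])) -> covL G' D' (Ex B)
with covR (G' D' : list form) : form -> Prop :=
| cR_in A : In A D' -> covR G' D' A
| cR_and1 B C : covR G' D' B -> covR G' D' (And B C)
| cR_and2 B C : covR G' D' C -> covR G' D' (And B C)
| cR_or B C : covR G' D' B -> covR G' D' C -> covR G' D' (Or B C)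
| cR_imp B C : covL G' D' B -> covR G' D' C -> covR G' D' (Imp B C)
| cR_all B c : covR G' D' (inst B (Fn c [])) -> covR G' D' (All B).

Scheme covL_mut := Induction for covL Sort Prop
with covR_mut := Induction for covR Sort Prop.

Lemma cov_mono G1 D1 G2 D2 :
  (forall A, In A G1 -> covL G2 D2 A) -> (forall A, In A D1 -> covR G2 D2 A) ->
  (forall A, covL G1 D1 A -> covL G2 D2 A) /\ (forall A, covR G1 D1 A -> covR G2 D2 A).
Proof.
  intros HG HD. split.
  - apply (covL_mut G1 D1 (fun A _ => covL G2 D2 A) (fun A _ => covR G2 D2 A)); intros.
    + apply HG; auto.
    + apply cL_and; auto.
    + apply cL_or1; auto.
    + apply cL_or2; auto.
    + apply cL_imp1; auto.
    + apply cL_imp2; auto.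
    + eapply cL_ex; eauto.
    + apply HD; auto.
    + apply cR_and1; auto.
    + apply cR_and2; auto.
    + apply cR_or; auto.
    + apply cR_imp; auto.
    + eapply cR_all; eauto.
  - apply (covR_mut G1 D1 (fun A _ => covL G2 D2 A) (fun A _ => covR G2 D2 A)); intros.
    + apply HG; auto.
    + apply cL_and; auto.
    + apply cL_or1; auto.
    + apply cL_or2; auto.
    + apply cL_imp1; auto.
    + apply cL_imp2; auto.
    + eapply cL_ex; eauto.
    + apply HD; auto.
    + apply cR_and1; auto.
    + apply cR_and2; auto.
    + apply cR_or; auto.
    + apply cR_imp; auto.
    + eapply cR_all; eauto.
Qed.

Lemma covR_ne G' D' A : covR G' D' A -> D' <> [].
Proof. induction 1; auto. intros ->; contradiction. Qed.

Lemma monoL G' D' X G0' G2 D2 : Permutation G' (X :: G0') -> covL G2 D2 X ->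
  (forall A, In A G0' -> In A G2) -> (forall A, In A D' -> In A D2) ->
  (forall A, covL G' D' A -> covL G2 D2 A) /\ (forall A, covR G' D' A -> covR G2 D2 A).
Proof.
  intros HP HX HG HD. apply cov_mono; intros A HA.
  - destruct (perm_in_inv _ _ _ _ HP HA) as [->|HA']; auto. apply cL_in; auto.
  - apply cR_in; auto.
Qed.

Lemma monoR G' D' X D0' G2 D2 : Permutation D' (X :: D0') -> covR G2 D2 X ->
  (forall A, In A G' -> In A G2) -> (forall A, In A D0' -> In A D2) ->
  (forall A, covL G' D' A -> covL G2 D2 A) /\ (forall A, covR G' D' A -> covR G2 D2 A).
Proof.
  intros HP HX HG HD. apply cov_mono; intros A HA.
  - apply cL_in; auto.
  - destruct (perm_in_inv _ _ _ _ HP HA) as [->|HA']; auto. apply cR_in; auto.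
Qed.

Lemma covL_and G' D' B C : covL G' D' (And B C) ->
  In (And B C) G' \/ (covL G' D' B /\ covL G' D' C).
Proof. intros H; inversion H; subst; auto. Qed.
Lemma covL_or G' D' B C : covL G' D' (Or B C) ->
  In (Or B C) G' \/ covL G' D' B \/ covL G' D' C.
Proof. intros H; inversion H; subst; auto. Qed.
Lemma covL_imp G' D' B C : covL G' D' (Imp B C) ->
  In (Imp B C) G' \/ covR G' D' B \/ covL G' D' C.
Proof. intros H; inversion H; subst; auto. Qed.
Lemma covL_ex G' D' B : covL G' D' (Ex B) ->
  In (Ex B) G' \/ exists c, covL G' D' (inst B (Fn c [])).
Proof. intros H; inversion H; subst; eauto. Qed.
Lemma covL_all G' D' B : covL G' D' (All B) -> In (All B) G'.
Proof. intros H; inversion H; subst; eauto. Qed.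
Lemma covR_and G' D' B C : covR G' D' (And B C) ->
  In (And B C) D' \/ covR G' D' B \/ covR G' D' C.
Proof. intros H; inversion H; subst; auto. Qed.
Lemma covR_or G' D' B C : covR G' D' (Or B C) ->
  In (Or B C) D' \/ (covR G' D' B /\ covR G' D' C).
Proof. intros H; inversion H; subst; auto. Qed.
Lemma covR_imp G' D' B C : covR G' D' (Imp B C) ->
  In (Imp B C) D' \/ (covL G' D' B /\ covR G' D' C).
Proof. intros H; inversion H; subst; auto. Qed.
Lemma covR_all G' D' B : covR G' D' (All B) ->
  In (All B) D' \/ exists c, covR G' D' (inst B (Fn c [])).
Proof. intros H; inversion H; subst; eauto. Qed.
Lemma covR_ex G' D' B : covR G' D' (Ex B) -> In (Ex B) D'.
Proof. intros H; inversion H; subst; eauto. Qed.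

Definition MainAt h := forall G D, cproof G D h -> forall G' D',
  (forall A, In A G -> covL G' D' A) -> (forall A, In A D -> covR G' D' A) ->
  exists h', h' <= h /\ cproof G' D' h'.

Definition BotAt h := forall G D D1, cproof G D h -> Permutation D (Bot :: D1) ->
  D1 <> [] -> exists h', h' <= S h /\ cproof G D1 h'.

Lemma perm_sw B D0 D3 : Permutation D0 (Bot :: D3) -> Permutation (B :: D0) (Bot :: B :: D3).
Proof. intros H. eapply perm_trans; [apply perm_skip; exact H|]. apply perm_swap. Qed.

Lemma perm_join {X : Type} (D : list X) A B D0 D1 :
  Permutation D (A :: D0) -> Permutation D (B :: D1) -> Permutation (A :: D0) (B :: D1).
Proof. intros H1 H2. eapply perm_trans; [apply Permutation_sym; exact H1|exact H2]. Qed.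

Lemma fresh_sub c G D D1 : fresh_in c G D -> Permutation D (Bot :: D1) -> fresh_in c G D1.
Proof.
  intros H HP A [HA|HA]; apply H; [left; auto|right].
  eapply perm_in; eauto.
Qed.


Lemma bot_step h : (forall n, n < h -> MainAt n /\ BotAt n) -> BotAt h.
Proof.
  intros IH G D D1 Hp HPD Hne. revert IH HPD Hne.
  destruct Hp as [G D Hax | G D D0 X n HP Hq | G D G0 B C n HP Hq | G D G0 B C n m HP Hq1 Hq2
    | G D D0 B C n m HP Hq1 Hq2 | G D D0 B C n HP Hq | G D G0 B C n m HP Hq1 Hq2
    | G D D0 B C n HP Hq | G D G0 P t n HP Hq | G D D0 P t n HP Hq | G D G0 B c n HP HF Hq
    | G D D0 B c n HP HF Hq]; intros IH HPD Hne.
  - destruct Hax as [HT|[A [HA [HG HD]]]].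
    + apply (Permutation_in _ HPD) in HT. destruct HT as [HT|HT]; [discriminate|].
      exists 1; split; [lia|]. apply cp_ax; left; auto.
    + apply (Permutation_in _ HPD) in HD. destruct HD as [<-|HD].
      * destruct D1 as [|Y D2]; [contradiction|]. exists 2. split; [lia|].
        apply cp_botR with (X := Y) (D0 := D2); [apply Permutation_refl|].
        apply cp_ax. right. exists Bot. split; [left; auto|split; [auto|left; auto]].
      * exists 1. split; [lia|]. apply cp_ax. right. exists A; auto.
  - destruct (perm_cons_split _ _ _ _ (perm_join _ _ _ _ _ HP HPD)) as [[-> HP2]|[D3 [HD0 HD1]]].
    + destruct (proj2 (IH n ltac:(lia)) _ _ _ Hq (perm_skip Bot HP2) Hne) as [h1 [Hle K]].
      exists h1; split; [lia|exact K].
    + destruct (proj1 (IH n ltac:(lia)) _ _ Hq G (Bot :: D3)) as [h1 [Hle K]].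
      * intros A HA; apply cL_in; auto.
      * intros A [<-|HA]; apply cR_in; [left; auto|]. apply (Permutation_in _ HD0) in HA; exact HA.
      * exists (S h1). split; [lia|]. apply cp_botR with (X := X) (D0 := D3); auto.
  - destruct (proj2 (IH n ltac:(lia)) _ _ _ Hq HPD Hne) as [h1 [Hle K]].
    exists (S h1); split; [lia|]. eapply cp_andL; eauto.
  - destruct (proj2 (IH n ltac:(lia)) _ _ _ Hq1 HPD Hne) as [h1 [Hle1 K1]].
    destruct (proj2 (IH m ltac:(lia)) _ _ _ Hq2 HPD Hne) as [h2 [Hle2 K2]].
    exists (S (max h1 h2)); split; [lia|]. eapply cp_orL; eauto.
  - destruct (perm_cons_split _ _ _ _ (perm_join _ _ _ _ _ HP HPD)) as [[E _]|[D3 [HD0 HD1]]];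
      [discriminate|].
    destruct (proj2 (IH n ltac:(lia)) _ _ _ Hq1 (perm_sw B _ _ HD0) ltac:(discriminate)) as [h1 [Hle1 K1]].
    destruct (proj2 (IH m ltac:(lia)) _ _ _ Hq2 (perm_sw C _ _ HD0) ltac:(discriminate)) as [h2 [Hle2 K2]].
    exists (S (max h1 h2)); split; [lia|]. eapply cp_andR; eauto.
  - destruct (perm_cons_split _ _ _ _ (perm_join _ _ _ _ _ HP HPD)) as [[E _]|[D3 [HD0 HD1]]];
      [discriminate|].
    destruct (proj2 (IH n ltac:(lia)) _ _ _ Hq (perm_sw B _ _ (perm_sw C _ _ HD0)) ltac:(discriminate)) as [h1 [Hle1 K1]].
    exists (S h1); split; [lia|]. eapply cp_orR; eauto.
  - destruct (proj2 (IH n ltac:(lia)) _ _ _ Hq1 (perm_sw B _ _ HPD) ltac:(discriminate)) as [h1 [Hle1 K1]].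
    destruct (proj2 (IH m ltac:(lia)) _ _ _ Hq2 HPD Hne) as [h2 [Hle2 K2]].
    exists (S (max h1 h2)); split; [lia|]. eapply cp_impL; eauto.
  - destruct (perm_cons_split _ _ _ _ (perm_join _ _ _ _ _ HP HPD)) as [[E _]|[D3 [HD0 HD1]]];
      [discriminate|].
    destruct (proj2 (IH n ltac:(lia)) _ _ _ Hq (perm_sw C _ _ HD0) ltac:(discriminate)) as [h1 [Hle1 K1]].
    exists (S h1); split; [lia|]. eapply cp_impR; eauto.
  - destruct (proj2 (IH n ltac:(lia)) _ _ _ Hq HPD Hne) as [h1 [Hle K]].
    exists (S h1); split; [lia|]. eapply cp_allL; eauto.
  - destruct (perm_cons_split _ _ _ _ (perm_join _ _ _ _ _ HP HPD)) as [[E _]|[D3 [HD0 HD1]]];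
      [discriminate|].
    destruct (proj2 (IH n ltac:(lia)) _ _ _ Hq (perm_sw _ _ _ (perm_sw _ _ _ HD0)) ltac:(discriminate)) as [h1 [Hle1 K1]].
    exists (S h1); split; [lia|]. eapply cp_exR; eauto.
  - destruct (proj2 (IH n ltac:(lia)) _ _ _ Hq HPD Hne) as [h1 [Hle K]].
    exists (S h1); split; [lia|]. eapply cp_exL; eauto. eapply fresh_sub; eauto.
  - destruct (perm_cons_split _ _ _ _ (perm_join _ _ _ _ _ HP HPD)) as [[E _]|[D3 [HD0 HD1]]];
      [discriminate|].
    destruct (proj2 (IH n ltac:(lia)) _ _ _ Hq (perm_sw _ _ _ HD0) ltac:(discriminate)) as [h1 [Hle1 K1]].
    exists (S h1); split; [lia|]. eapply cp_allR; eauto. eapply fresh_sub; eauto.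
Qed.

Lemma main_step h : (forall n, n < h -> MainAt n /\ BotAt n) -> MainAt h.
Proof.
  intros IH G D Hp G' D' HG HD. revert IH HG HD.
  destruct Hp as [G D Hax | G D D0 X n HP Hq | G D G0 B C n HP Hq | G D G0 B C n m HP Hq1 Hq2
    | G D D0 B C n m HP Hq1 Hq2 | G D D0 B C n HP Hq | G D G0 B C n m HP Hq1 Hq2
    | G D D0 B C n HP Hq | G D G0 P t n HP Hq | G D D0 P t n HP Hq | G D G0 B c n HP HF Hq
    | G D D0 B c n HP HF Hq]; intros IH HG HD.
  -
    exists 1. split; [lia|]. apply cp_ax. destruct Hax as [HT|[A [HA [HGA HDA]]]].
    + left. specialize (HD _ HT). inversion HD; auto.
    + right. exists A. split; auto.
      specialize (HG _ HGA); specialize (HD _ HDA).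
      destruct HA as [->|HA]; [|destruct A; try contradiction];
        inversion HG; inversion HD; auto.
  -
    pose proof (HD X (perm_in0 _ _ _ HP)) as HX.
    destruct (cov_mono G' D' G' (Bot :: D')) as [M1 M2].
    { intros A HA; apply cL_in; auto. }
    { intros A HA; apply cR_in; right; auto. }
    destruct (proj1 (IH n ltac:(lia)) _ _ Hq G' (Bot :: D')) as [h1 [Hle K]].
    { intros A HA; apply M1, HG; auto. }
    { intros A [<-|HA]; [apply cR_in; left; auto| apply M2, HD; eapply perm_in; eauto]. }
    destruct (proj2 (IH h1 ltac:(lia)) _ _ _ K (Permutation_refl _) (covR_ne _ _ _ HX))
      as [h2 [Hle2 K2]].
    exists h2; split; [lia|auto].
  -
    destruct (covL_and _ _ _ _ (HG _ (perm_in0 _ _ _ HP))) as [Hin|[HB HC]].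
    + destruct (in_perm _ _ Hin) as [G0' HG'].
      destruct (monoL G' D' (And B C) G0' (B :: C :: G0') D' HG') as [M1 M2].
      { apply cL_and; apply cL_in; simpl; auto. }
      { intros A HA; simpl; auto. }
      { auto. }
      destruct (proj1 (IH n ltac:(lia)) _ _ Hq (B :: C :: G0') D') as [h1 [Hle K]].
      { intros A [<-|[<-|HA]]; [apply cL_in; simpl; auto|apply cL_in; simpl; auto|].
        apply M1, HG; eapply perm_in; eauto. }
      { intros A HA; apply M2, HD; auto. }
      exists (S h1); split; [lia|]. eapply cp_andL; eauto.
    + destruct (proj1 (IH n ltac:(lia)) _ _ Hq G' D') as [h1 [Hle K]].
      { intros A [<-|[<-|HA]]; auto. apply HG; eapply perm_in; eauto. }
      { auto. }
      exists h1; split; [lia|auto].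
  -
    destruct (covL_or _ _ _ _ (HG _ (perm_in0 _ _ _ HP))) as [Hin|[HB|HC]].
    + destruct (in_perm _ _ Hin) as [G0' HG'].
      destruct (monoL G' D' (Or B C) G0' (B :: G0') D' HG') as [M1 M2].
      { apply cL_or1; apply cL_in; simpl; auto. }
      { intros A HA; simpl; auto. }
      { auto. }
      destruct (monoL G' D' (Or B C) G0' (C :: G0') D' HG') as [M3 M4].
      { apply cL_or2; apply cL_in; simpl; auto. }
      { intros A HA; simpl; auto. }
      { auto. }
      destruct (proj1 (IH n ltac:(lia)) _ _ Hq1 (B :: G0') D') as [h1 [Hle1 K1]].
      { intros A [<-|HA]; [apply cL_in; simpl; auto|].
        apply M1, HG; eapply perm_in; eauto. }
      { intros A HA; apply M2, HD; auto. }
      destruct (proj1 (IH m ltac:(lia)) _ _ Hq2 (C :: G0') D') as [h2 [Hle2 K2]].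
      { intros A [<-|HA]; [apply cL_in; simpl; auto|].
        apply M3, HG; eapply perm_in; eauto. }
      { intros A HA; apply M4, HD; auto. }
      exists (S (max h1 h2)); split; [lia|]. eapply cp_orL; eauto.
    + destruct (proj1 (IH n ltac:(lia)) _ _ Hq1 G' D') as [h1 [Hle K]].
      { intros A [<-|HA]; auto. apply HG; eapply perm_in; eauto. }
      { auto. }
      exists h1; split; [lia|auto].
    + destruct (proj1 (IH m ltac:(lia)) _ _ Hq2 G' D') as [h1 [Hle K]].
      { intros A [<-|HA]; auto. apply HG; eapply perm_in; eauto. }
      { auto. }
      exists h1; split; [lia|auto].
  -
    destruct (covR_and _ _ _ _ (HD _ (perm_in0 _ _ _ HP))) as [Hin|[HB|HC]].
    + destruct (in_perm _ _ Hin) as [D0' HD'].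
      destruct (monoR G' D' (And B C) D0' G' (B :: D0') HD') as [M1 M2].
      { apply cR_and1; apply cR_in; simpl; auto. }
      { auto. }
      { intros A HA; simpl; auto. }
      destruct (monoR G' D' (And B C) D0' G' (C :: D0') HD') as [M3 M4].
      { apply cR_and2; apply cR_in; simpl; auto. }
      { auto. }
      { intros A HA; simpl; auto. }
      destruct (proj1 (IH n ltac:(lia)) _ _ Hq1 G' (B :: D0')) as [h1 [Hle1 K1]].
      { intros A HA; apply M1, HG; auto. }
      { intros A [<-|HA]; [apply cR_in; simpl; auto|].
        apply M2, HD; eapply perm_in; eauto. }
      destruct (proj1 (IH m ltac:(lia)) _ _ Hq2 G' (C :: D0')) as [h2 [Hle2 K2]].
      { intros A HA; apply M3, HG; auto. }
      { intros A [<-|HA]; [apply cR_in; simpl; auto|].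
        apply M4, HD; eapply perm_in; eauto. }
      exists (S (max h1 h2)); split; [lia|]. eapply cp_andR; eauto.
    + destruct (proj1 (IH n ltac:(lia)) _ _ Hq1 G' D') as [h1 [Hle K]].
      { auto. }
      { intros A [<-|HA]; auto. apply HD; eapply perm_in; eauto. }
      exists h1; split; [lia|auto].
    + destruct (proj1 (IH m ltac:(lia)) _ _ Hq2 G' D') as [h1 [Hle K]].
      { auto. }
      { intros A [<-|HA]; auto. apply HD; eapply perm_in; eauto. }
      exists h1; split; [lia|auto].
  -
    destruct (covR_or _ _ _ _ (HD _ (perm_in0 _ _ _ HP))) as [Hin|[HB HC]].
    + destruct (in_perm _ _ Hin) as [D0' HD'].
      destruct (monoR G' D' (Or B C) D0' G' (B :: C :: D0') HD') as [M1 M2].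
      { apply cR_or; apply cR_in; simpl; auto. }
      { auto. }
      { intros A HA; simpl; auto. }
      destruct (proj1 (IH n ltac:(lia)) _ _ Hq G' (B :: C :: D0')) as [h1 [Hle K]].
      { intros A HA; apply M1, HG; auto. }
      { intros A [<-|[<-|HA]]; [apply cR_in; simpl; auto|apply cR_in; simpl; auto|].
        apply M2, HD; eapply perm_in; eauto. }
      exists (S h1); split; [lia|]. eapply cp_orR; eauto.
    + destruct (proj1 (IH n ltac:(lia)) _ _ Hq G' D') as [h1 [Hle K]].
      { auto. }
      { intros A [<-|[<-|HA]]; auto. apply HD; eapply perm_in; eauto. }
      exists h1; split; [lia|auto].
  -
    destruct (covL_imp _ _ _ _ (HG _ (perm_in0 _ _ _ HP))) as [Hin|[HB|HC]].
    + destruct (in_perm _ _ Hin) as [G0' HG'].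
      destruct (monoL G' D' (Imp B C) G0' G0' (B :: D') HG') as [M1 M2].
      { apply cL_imp1; apply cR_in; simpl; auto. }
      { auto. }
      { intros A HA; simpl; auto. }
      destruct (monoL G' D' (Imp B C) G0' (C :: G0') D' HG') as [M3 M4].
      { apply cL_imp2; apply cL_in; simpl; auto. }
      { intros A HA; simpl; auto. }
      { auto. }
      destruct (proj1 (IH n ltac:(lia)) _ _ Hq1 G0' (B :: D')) as [h1 [Hle1 K1]].
      { intros A HA. apply M1, HG; eapply perm_in; eauto. }
      { intros A [<-|HA]; [apply cR_in; simpl; auto|]. apply M2, HD; auto. }
      destruct (proj1 (IH m ltac:(lia)) _ _ Hq2 (C :: G0') D') as [h2 [Hle2 K2]].
      { intros A [<-|HA]; [apply cL_in; simpl; auto|].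
        apply M3, HG; eapply perm_in; eauto. }
      { intros A HA; apply M4, HD; auto. }
      exists (S (max h1 h2)); split; [lia|]. eapply cp_impL; eauto.
    + destruct (proj1 (IH n ltac:(lia)) _ _ Hq1 G' D') as [h1 [Hle K]].
      { intros A HA. apply HG; eapply perm_in; eauto. }
      { intros A [<-|HA]; auto. }
      exists h1; split; [lia|auto].
    + destruct (proj1 (IH m ltac:(lia)) _ _ Hq2 G' D') as [h1 [Hle K]].
      { intros A [<-|HA]; auto. apply HG; eapply perm_in; eauto. }
      { auto. }
      exists h1; split; [lia|auto].
  -
    destruct (covR_imp _ _ _ _ (HD _ (perm_in0 _ _ _ HP))) as [Hin|[HB HC]].
    + destruct (in_perm _ _ Hin) as [D0' HD'].
      destruct (monoR G' D' (Imp B C) D0' (B :: G') (C :: D0') HD') as [M1 M2].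
      { apply cR_imp; [apply cL_in|apply cR_in]; simpl; auto. }
      { intros A HA; simpl; auto. }
      { intros A HA; simpl; auto. }
      destruct (proj1 (IH n ltac:(lia)) _ _ Hq (B :: G') (C :: D0')) as [h1 [Hle K]].
      { intros A [<-|HA]; [apply cL_in; simpl; auto|]. apply M1, HG; auto. }
      { intros A [<-|HA]; [apply cR_in; simpl; auto|].
        apply M2, HD; eapply perm_in; eauto. }
      exists (S h1); split; [lia|]. eapply cp_impR; eauto.
    + destruct (proj1 (IH n ltac:(lia)) _ _ Hq G' D') as [h1 [Hle K]].
      { intros A [<-|HA]; auto. }
      { intros A [<-|HA]; auto. apply HD; eapply perm_in; eauto. }
      exists h1; split; [lia|auto].
  -
    pose proof (covL_all _ _ _ (HG _ (perm_in0 _ _ _ HP))) as Hin.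
    destruct (in_perm _ _ Hin) as [G0' HG'].
    destruct (monoL G' D' (All P) G0' (All P :: inst P t :: G0') D' HG') as [M1 M2].
    { apply cL_in; simpl; auto. }
    { intros A HA; simpl; auto. }
    { auto. }
    destruct (proj1 (IH n ltac:(lia)) _ _ Hq (All P :: inst P t :: G0') D') as [h1 [Hle K]].
    { intros A [<-|[<-|HA]]; [apply cL_in; simpl; auto|apply cL_in; simpl; auto|].
      apply M1, HG; eapply perm_in; eauto. }
    { intros A HA; apply M2, HD; auto. }
    exists (S h1); split; [lia|]. eapply cp_allL; eauto.
  -
    pose proof (covR_ex _ _ _ (HD _ (perm_in0 _ _ _ HP))) as Hin.
    destruct (in_perm _ _ Hin) as [D0' HD'].
    destruct (monoR G' D' (Ex P) D0' G' (Ex P :: inst P t :: D0') HD') as [M1 M2].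
    { apply cR_in; simpl; auto. }
    { auto. }
    { intros A HA; simpl; auto. }
    destruct (proj1 (IH n ltac:(lia)) _ _ Hq G' (Ex P :: inst P t :: D0')) as [h1 [Hle K]].
    { intros A HA; apply M1, HG; auto. }
    { intros A [<-|[<-|HA]]; [apply cR_in; simpl; auto|apply cR_in; simpl; auto|].
      apply M2, HD; eapply perm_in; eauto. }
    exists (S h1); split; [lia|]. eapply cp_exR; eauto.
  -
    destruct (fresh_G _ _ _ _ _ HF HP) as [FB [FG0 FD]].
    destruct (covL_ex _ _ _ (HG _ (perm_in0 _ _ _ HP))) as [Hin|[d Hd]].
    + destruct (in_perm _ _ Hin) as [G0' HG'].
      destruct (fresh_exists (G' ++ D') 0 0) as [c' [_ [_ Fc]]].
      pose proof (premL n B c G0 D c' (ren_proof n) Hq FB FG0 FD) as K0.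
      destruct (monoL G' D' (Ex B) G0' (inst B (Fn c' []) :: G0') D' HG') as [M1 M2].
      { eapply cL_ex. apply cL_in; simpl; auto. }
      { intros A HA; simpl; auto. }
      { auto. }
      destruct (proj1 (IH n ltac:(lia)) _ _ K0 (inst B (Fn c' []) :: G0') D') as [h1 [Hle K]].
      { intros A [<-|HA]; [apply cL_in; simpl; auto|].
        apply M1, HG; eapply perm_in; eauto. }
      { intros A HA; apply M2, HD; auto. }
      exists (S h1); split; [lia|]. eapply cp_exL; eauto. apply fresh_app; auto.
    + pose proof (premL n B c G0 D d (ren_proof n) Hq FB FG0 FD) as K0.
      destruct (proj1 (IH n ltac:(lia)) _ _ K0 G' D') as [h1 [Hle K]].
      { intros A [<-|HA]; auto. apply HG; eapply perm_in; eauto. }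
      { auto. }
      exists h1; split; [lia|auto].
  -
    destruct (fresh_D _ _ _ _ _ HF HP) as [FB [FG FD0]].
    destruct (covR_all _ _ _ (HD _ (perm_in0 _ _ _ HP))) as [Hin|[d Hd]].
    + destruct (in_perm _ _ Hin) as [D0' HD'].
      destruct (fresh_exists (G' ++ D') 0 0) as [c' [_ [_ Fc]]].
      pose proof (premR n B c G D0 c' (ren_proof n) Hq FB FG FD0) as K0.
      destruct (monoR G' D' (All B) D0' G' (inst B (Fn c' []) :: D0') HD') as [M1 M2].
      { eapply cR_all. apply cR_in; simpl; auto. }
      { auto. }
      { intros A HA; simpl; auto. }
      destruct (proj1 (IH n ltac:(lia)) _ _ K0 G' (inst B (Fn c' []) :: D0')) as [h1 [Hle K]].
      { intros A HA; apply M1, HG; auto. }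
      { intros A [<-|HA]; [apply cR_in; simpl; auto|].
        apply M2, HD; eapply perm_in; eauto. }
      exists (S h1); split; [lia|]. eapply cp_allR; eauto. apply fresh_app; auto.
    + pose proof (premR n B c G D0 d (ren_proof n) Hq FB FG FD0) as K0.
      destruct (proj1 (IH n ltac:(lia)) _ _ K0 G' D') as [h1 [Hle K]].
      { auto. }
      { intros A [<-|HA]; auto. apply HD; eapply perm_in; eauto. }
      exists h1; split; [lia|auto].
Qed.

Lemma main_all : forall h, MainAt h /\ BotAt h.
Proof.
  intro h. induction h as [h IH] using lt_wf_ind. split.
  - apply main_step; auto.
  - apply bot_step; auto.
Qed.

Theorem lemma2 (G D G' D' : list form) (h : nat) :
  cproof G D h -> set_incl G G' -> set_incl D D' ->
  exists h', h' <= h /\ cproof G' D' h'.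
Proof.
  intros Hp HG HD. apply (proj1 (main_all h) _ _ Hp); intros A HA.
  - apply cL_in; auto.
  - apply cR_in; auto.
Qed.
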